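(* Let $\{p_n\}_{n\ge0}$ be a sequence of real polynomials with $\deg p_n=n$, let $c\in\mathbb{R}$, fix $j\in\mathbb{N}\cup\{0\}$, and let $K_n^{(j,j)}(c,c)=\sum_{i=0}^n \big(p_i^{(j)}(c)\big)^2$. Assume there are real constants $a,b$ such that for every integer $k\ge0$, $p_n^{(k)}(c)\approx C_k(-1)^n n^{ak+b}$ as $n\to\infty$, with $C_k\neq0$ independent of $n$ and $2(ak+b)+1>0$. Let $\lambda_n=\gamma n^2+\delta n$ with $\gamma,\delta\in\mathbb{R}$, and define $$\alpha_n=\sum_{i=j+1}^n(\lambda_i-\lambda_{i-1})K_{i-1}^{(j,j)}(c,c),\qquad n\ge j+1.$$ Then $$\lim_{n\to+\infty}\frac{\alpha_n}{n^{2(aj+b)+3}}=\frac{2\gamma C_j^2}{(2(aj+b)+3)(2(aj+b)+1)}\quad\text{if }\gamma\ne0,$$ $$\lim_{n\to+\infty}\frac{\alpha_n}{n^{2(aj+b+1)}}=\frac{\delta C_j^2}{2(aj+b+1)(2(aj+b)+1)}\quad\text{if }\gamma=0.$$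
   Context: The notation $a_n\approx b_n$ means $\lim_{n\to+\infty}a_n/b_n=1$. *)

(* Defs.v *)
From HB Require Import structures.
From mathcomp Require Import all_boot all_order all_algebra.
From mathcomp Require Import all_classical all_reals all_analysis.
Set Implicit Arguments. Unset Strict Implicit. Unset Printing Implicit Defensive.
Import Order.TTheory GRing.Theory Num.Theory.
Local Open Scope ring_scope.

Definition Kjj (R : realType) (p : nat -> {poly R}) (j : nat) (c : R) (n : nat) : R :=
  \sum_(i < n.+1) ((p i)^`(j)).[c] ^+ 2.

Definition lam (R : realType) (gamma delta : R) (n : nat) : R :=
  gamma * (n%:R) ^+ 2 + delta * n%:R.

Definition alpha (R : realType) (p : nat -> {poly R}) (j : nat) (c gamma delta : R)
  (n : nat) : R :=
  \sum_(j.+1 <= i < n.+1)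
     (lam gamma delta i - lam gamma delta i.-1) * Kjj p j c i.-1.

(* Main.v *)
Require Import Defs.
From HB Require Import structures.
From mathcomp Require Import all_boot all_order all_algebra.
From mathcomp Require Import all_classical all_reals all_analysis.
From mathcomp Require Import ring lra.
Import Order.TTheory GRing.Theory Num.Theory.
Import numFieldNormedType.Exports.
Local Open Scope classical_set_scope.
Local Open Scope ring_scope.
Lemma g_lim (R : realType) (t : R) :
  (fun n : nat => n.+1%:R * (1 - (1 - n.+1%:R^-1) `^ t)) @ \oo --> t.
Proof.
case: (@is_derive1_powR R t 1 ltr01) => Dd Dv.
move: Dd; rewrite /derivable -/(derive _ _ _) Dv powR1 mulr1.
move/cvgr_dnbhsP => /(_ (fun n : nat => - n.+1%:R^-1)) H.
have := H (conj _ _).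
move=> {}H; apply: cvg_trans (H _ _); last first.
- rewrite -oppr0; apply: cvgN. 
  exact: (@cvg_harmonic R).
- by move=> n; rewrite oppr_eq0 invr_eq0 pnatr_eq0.
apply: near_eq_cvg; near=> n => /=.
have -> : (- n.+1%:R^-1)%:A = - n.+1%:R^-1 :> R by rewrite /GRing.scale/= mulr1.
rewrite -[_ *: _]/(_ * _) invrN invrK (addrC _ 1) mulNr -mulrN opprB //.
Unshelve. all: end_near. Qed.
Lemma stolz (R : realType) (a b : R^nat) (L : R) :
  (forall n, 0 < b n) -> (forall n, b n < b n.+1) ->
  (forall M, \forall n \near \oo, M <= b n) ->
  (fun n => (a n.+1 - a n) / (b n.+1 - b n)) @ \oo --> L ->
  (fun n => a n / b n) @ \oo --> L.
Proof.
move=> bpos binc bbig H.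
apply/cvgrPdist_le => e e0.
have e20 : 0 < e / 2 by rewrite divr_gt0.
move/cvgrPdist_le: H => /(_ (e/2) e20) [N _ HN].
have step : forall k, `|a (N+k)%N - a N - L * (b (N+k)%N - b N)| <= e/2 * (b (N+k)%N - b N).
  elim=> [|k IH]; first by rewrite addn0 !subrr mulr0 subr0 normr0 mulr0.
  rewrite addnS.
  have dpos : 0 < b (N + k).+1 - b (N + k)%N by rewrite subr_gt0.
  have HNk := HN (N + k)%N (leq_addr _ _).
  have eq1 : a (N + k).+1 - a N - L * (b (N + k).+1 - b N) =
     (a (N + k)%N - a N - L * (b (N + k)%N - b N)) +
     ((a (N + k).+1 - a (N + k)%N) / (b (N + k).+1 - b (N + k)%N) - L) * (b (N + k).+1 - b (N + k)%N).
    rewrite mulrBl divfK ?gt_eqF //; ring.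
  rewrite eq1 (le_trans (ler_normD _ _)) //.
  have -> : e / 2 * (b (N + k).+1 - b N) = e/2 * (b (N + k)%N - b N) + e/2 * (b (N + k).+1 - b (N + k)%N) by ring.
  apply: lerD => //.
  by rewrite normrM (gtr0_norm dpos) ler_wpM2r ?(ltW dpos) // distrC.
set X := `|a N - L * b N|.
near=> n.
have Nn : (N <= n)%N by near: n; apply: nbhs_infty_ge.
have bn : 2 * X / e <= b n by near: n; apply: bbig.
have bn0 := bpos n.
have := step (n - N)%N; rewrite subnKC // => st.
have eq2 : L - a n / b n = - (a n - a N - L * (b n - b N) + (a N - L * b N)) / b n.
  by field; rewrite gt_eqF.
have ib : 0 < (b n)^-1 by rewrite invr_gt0.
rewrite eq2 normrM normrN (gtr0_norm ib) ler_pdivrMr //.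
have h1 : X <= e / 2 * b n.
  move: bn; rewrite ler_pdivrMr // => bn.
  have : 2 * X <= e * b n by rewrite (mulrC e).
  move=> h; lra.
have h2 : 0 < e / 2 * b N by rewrite mulr_gt0.
have h3 := ler_normD (a n - a N - L * (b n - b N)) (a N - L * b N).
rewrite -/X in h3.
have ee : e / 2 * (b n - b N) = e / 2 * b n - e / 2 * b N by ring.
rewrite ee in st.
lra.
Unshelve. all: end_near. Qed.
Lemma pow_ident (R : realType) (r : R) (n : nat) :
  n.+2%:R `^ (r + 1) - n.+1%:R `^ (r + 1) =
  n.+2%:R `^ r * (n.+2%:R * (1 - (1 - n.+2%:R^-1) `^ (r + 1))) :> R.
Proof.
set m : R := n.+2%:R.
have m0 : 0 < m by rewrite ltr0n.
have em : n.+1%:R = m * (1 - m^-1) :> R.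
  rewrite mulrBr mulr1 divff ?gt_eqF // /m -addn1 natrD; ring.
have h1 : 0 <= 1 - m^-1.
  by rewrite subr_ge0 invf_le1 // /m ler1n.
rewrite em powRM ?(ltW m0) // (@powRD R m r 1); last by rewrite (gt_eqF m0) implybT.
rewrite powRr1 ?(ltW m0) //; ring.
Qed.

Lemma KL (R : realType) (r L : R) (u : R^nat) : -1 < r ->
  (fun n => u n / n%:R `^ r) @ \oo --> L ->
  (fun n => (\sum_(i < n.+1) u i) / n%:R `^ (r + 1)) @ \oo --> L / (r + 1).
Proof.
move=> r1 H.
have t0 : 0 < r + 1 by lra.
rewrite -cvg_shiftS.
apply: (@stolz R (fun n => \sum_(i < n.+2) u i) (fun n => n.+1%:R `^ (r + 1))).
- by move=> n; rewrite powR_gt0 // ltr0n.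
- move=> n; apply: gt0_ltr_powR => //; rewrite ?nnegrE ?ler0n ?ltr_nat //.
- move=> M; set M' := Num.max M 1.
  have M'0 : 0 < M' by rewrite lt_max ltr01 orbT.
  near=> n.
  have hn : M' `^ (r + 1)^-1 <= n.+1%:R.
    near: n; apply: filterS (nbhs_infty_ger (M' `^ (r + 1)^-1)).
    by move=> n /le_trans; apply; rewrite ler_nat.
  have := @ge0_ler_powR R (r + 1) (ltW t0) (M' `^ (r + 1)^-1) n.+1%:R.
  rewrite !nnegrE powR_ge0 ler0n => /(_ isT isT hn).
  rewrite -powRrM mulVf ?gt_eqF // powRr1 ?(ltW M'0) //.
  by apply: le_trans; rewrite le_max lexx.
- have E : forall n, (\sum_(i < n.+3) u i - \sum_(i < n.+2) u i) /
     (n.+2%:R `^ (r + 1) - n.+1%:R `^ (r + 1)) =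
     (u n.+2 / n.+2%:R `^ r) * (n.+2%:R * (1 - (1 - n.+2%:R^-1) `^ (r + 1)))^-1.
    move=> n; rewrite big_ord_recr /= addrAC subrr add0r pow_ident invfM mulrA //.
  under eq_fun do rewrite E.
  apply: cvgM.
    by move: H; rewrite -cvg_shiftS -cvg_shiftS.
  apply: cvgV; first by rewrite gt_eqF.
  by move: (@g_lim R (r + 1)); rewrite -cvg_shiftS.
Unshelve. all: end_near. Qed.
Lemma ev_cvg (R : realType) (f g : R^nat) (l : R) :
  (\forall n \near \oo, f n = g n) -> f @ \oo --> l -> g @ \oo --> l.
Proof. by move=> e H; apply: cvg_trans H; apply: near_eq_cvg. Qed.

Lemma inv_cvg0 (R : realType) : (fun n : nat => (n%:R : R)^-1) @ \oo --> 0.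
Proof. by rewrite -cvg_shiftS; exact: (@cvg_harmonic R). Qed.

Lemma Kjj_S (R : realType) (p : nat -> {poly R}) (j : nat) (c : R) (m : nat) :
  Kjj p j c m.+1 = Kjj p j c m + ((p m.+1)^`(j)).[c] ^+ 2.
Proof. by rewrite /Kjj big_ord_recr. Qed.

Lemma lam_S (R : realType) (g d : R) (k : nat) :
  lam g d k.+1 - lam g d k.+1.-1 = g * (2 * k%:R + 1) + d.
Proof. rewrite /lam /= -addn1 natrD; ring. Qed.

Definition vseq (R : realType) (p : nat -> {poly R}) (j : nat) (c g d : R) : R^nat :=
  fun i => if (j < i)%N then (lam g d i - lam g d i.-1) * Kjj p j c i.-1 else 0.
Arguments vseq {R}.

Lemma alpha_sum (R : realType) (p : nat -> {poly R}) (j : nat) (c g d : R) (n : nat) :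
  (j <= n)%N ->
  alpha p j c g d n = \sum_(i < n.+1) vseq p j c g d i.
Proof.
move=> jn; rewrite -(big_mkord (fun _ => true) (vseq p j c g d)).
rewrite (@big_cat_nat _ _ _ j.+1 0 n.+1) //=.
rewrite [X in X + _]big_nat_cond big1 ?add0r; last first.
  by move=> i /andP[/andP[_ hi] _]; rewrite /vseq ltnNge -ltnS hi.
by rewrite /alpha; apply: eq_big_nat => i /andP[hi _]; rewrite /vseq hi.
Qed.

Theorem proposition1 (R : realType) (p : nat -> {poly R}) (c : R) (j : nat)
    (a b : R) (C : nat -> R) (gamma delta : R) :
  (forall n, size (p n) = n.+1) ->
  (forall k : nat, C k != 0 /\ 0 < 2 * (a * k%:R + b) + 1 /\
     (fun n : nat => ((p n)^`(k)).[c] /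
        (C k * (-1) ^+ n * (n%:R `^ (a * k%:R + b)))) @ \oo --> (1 : R)) ->
  (gamma != 0 ->
     (fun n : nat => alpha p j c gamma delta n /
        (n%:R `^ (2 * (a * j%:R + b) + 3))) @ \oo -->
     (2 * gamma * C j ^+ 2 /
        ((2 * (a * j%:R + b) + 3) * (2 * (a * j%:R + b) + 1))))
  /\
  (gamma = 0 ->
     (fun n : nat => alpha p j c gamma delta n /
        (n%:R `^ (2 * (a * j%:R + b + 1)))) @ \oo -->
     (delta * C j ^+ 2 /
        (2 * (a * j%:R + b + 1) * (2 * (a * j%:R + b) + 1)))).
Proof.
move=> _ Hyp.
have [Cj0 [s1 rho]] := Hyp j.
set x := a * j%:R + b.
rewrite -/x in s1 rho.
have Ex : forall n : nat, (0 < n)%N -> n%:R `^ (2 * x) = (n%:R `^ x) ^+ 2 :> R.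
  move=> n n0; rewrite mulrC powRrM powR_mulrn // powR_ge0 //.
have S1 : (fun n => ((p n)^`(j)).[c] ^+ 2 / n%:R `^ (2 * x)) @ \oo --> C j ^+ 2.
  have L1 : (fun n => C j ^+ 2 * (((p n)^`(j)).[c] / (C j * (-1) ^+ n * n%:R `^ x)) *
     (((p n)^`(j)).[c] / (C j * (-1) ^+ n * n%:R `^ x))) @ \oo --> C j ^+ 2 * 1 * 1.
    by apply: cvgM => //; apply: cvgM => //; exact: cvg_cst.
  rewrite mulr1 mulr1 in L1.
  apply: ev_cvg L1; near=> n.
  have n0 : (0 < n)%N by near: n; apply: nbhs_infty_gt.
  have D0 : 0 < n%:R `^ x :> R by rewrite powR_gt0 // ltr0n.
  have s0 : ((-1) ^+ n : R) != 0 by rewrite signr_eq0.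
  have s2 : ((-1) ^+ n : R) * (-1) ^+ n = 1.
    by rewrite -exprD addnn -mul2n exprM sqrrN !expr1n.
  rewrite Ex //=.
  move: s0 s2; set s := (-1) ^+ n; set D := n%:R `^ x; set P := (p n)^`(j).[c] => s0 s2.
  have D0' : D != 0 by rewrite gt_eqF.
  transitivity (C j ^+ 2 * P ^+ 2 / (C j ^+ 2 * (s * s) * D ^+ 2)).
    by field; rewrite s0 D0' Cj0.
  rewrite s2 mulr1; field.
  by rewrite D0' Cj0.
have S2 : (fun n => Kjj p j c n / n%:R `^ (2 * x + 1)) @ \oo --> C j ^+ 2 / (2 * x + 1).
  have r1 : -1 < 2 * x by lra.
  have K := @KL R _ _ _ r1 S1. exact K.
have S3 : (fun n => Kjj p j c n.-1 / n%:R `^ (2 * x + 1)) @ \oo --> C j ^+ 2 / (2 * x + 1).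
  have L : (fun n => Kjj p j c n / n%:R `^ (2 * x + 1) -
     (((p n)^`(j)).[c] ^+ 2 / n%:R `^ (2 * x)) * (n%:R)^-1) @ \oo -->
     C j ^+ 2 / (2 * x + 1) - C j ^+ 2 * 0.
    by apply: cvgB => //; apply: cvgM => //; exact: inv_cvg0.
  rewrite mulr0 subr0 in L.
  apply: ev_cvg L; near=> n.
  have n0 : (0 < n)%N by near: n; apply: nbhs_infty_gt.
  have [m ->] : exists m, n = m.+1 by exists n.-1; rewrite prednK.
  have m0 : 0 < m.+1%:R :> R by rewrite ltr0n.
  have D0 : 0 < m.+1%:R `^ (2 * x) :> R by rewrite powR_gt0.
  rewrite Kjj_S /= powRD ?powRr1 ?(ltW m0) //; last by rewrite (gt_eqF m0) implybT.
  by field; rewrite !gt_eqF.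
split.
  move=> g0.
  have S4 : (fun i => vseq p j c gamma delta i / i%:R `^ (2 * x + 1 + 1)) @ \oo -->
      2 * gamma * (C j ^+ 2 / (2 * x + 1)).
    have L : (fun i => (2 * gamma + (delta - gamma) * (i%:R)^-1) *
        (Kjj p j c i.-1 / i%:R `^ (2 * x + 1))) @ \oo -->
        (2 * gamma + (delta - gamma) * 0) * (C j ^+ 2 / (2 * x + 1)).
      apply: cvgM => //; apply: cvgD; first exact: cvg_cst.
      by apply: cvgM; [exact: cvg_cst | exact: inv_cvg0].
    rewrite mulr0 addr0 in L.
    apply: ev_cvg L; near=> n.
    have n0 : (j < n)%N by near: n; apply: nbhs_infty_gt.
    have [m en] : exists m, n = m.+1 by exists n.-1; rewrite prednK // (leq_ltn_trans _ n0).
    have jm : (j < m.+1)%N by rewrite -en.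
    rewrite en.
    have m0 : 0 < m.+1%:R :> R by rewrite ltr0n.
    have D0 : 0 < m.+1%:R `^ (2 * x + 1) :> R by rewrite powR_gt0.
    rewrite /vseq jm lam_S /= (@powRD R m.+1%:R (2 * x + 1) 1) ?powRr1 ?(ltW m0) //; last by rewrite (gt_eqF m0) implybT.
    have em : m.+1%:R = m%:R + 1 :> R by rewrite -addn1 natrD.
    rewrite em in m0 D0 *.
    by field; rewrite !gt_eqF.
  have r1 : -1 < 2 * x + 1 + 1 by lra.
  have K := @KL R _ _ _ r1 S4.
  have -> : 2 * x + 3 = 2 * x + 1 + 1 + 1 by ring.
  have -> : 2 * gamma * C j ^+ 2 / ((2 * x + 1 + 1 + 1) * (2 * x + 1)) =
     2 * gamma * (C j ^+ 2 / (2 * x + 1)) / (2 * x + 1 + 1 + 1).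
    by field; rewrite !gt_eqF //; lra.
  apply: ev_cvg K; near=> n.
  have jn : (j <= n)%N by near: n; apply: nbhs_infty_ge.
  by rewrite alpha_sum.
move=> g0; rewrite g0.
have S4 : (fun i => vseq p j c 0 delta i / i%:R `^ (2 * x + 1)) @ \oo -->
    delta * (C j ^+ 2 / (2 * x + 1)).
  have L : (fun i => delta * (Kjj p j c i.-1 / i%:R `^ (2 * x + 1))) @ \oo -->
      delta * (C j ^+ 2 / (2 * x + 1)).
    by apply: cvgM => //; exact: cvg_cst.
  apply: ev_cvg L; near=> n.
  have n0 : (j < n)%N by near: n; apply: nbhs_infty_gt.
  have [m en] : exists m, n = m.+1 by exists n.-1; rewrite prednK // (leq_ltn_trans _ n0).
    have jm : (j < m.+1)%N by rewrite -en.
    rewrite en.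
  rewrite /vseq jm lam_S /=.
  by rewrite mul0r add0r mulrA.
have r1 : -1 < 2 * x + 1 by lra.
have K := @KL R _ _ _ r1 S4.
have -> : 2 * (x + 1) = 2 * x + 1 + 1 by ring.
have -> : delta * C j ^+ 2 / ((2 * x + 1 + 1) * (2 * x + 1)) =
   delta * (C j ^+ 2 / (2 * x + 1)) / (2 * x + 1 + 1).
  by field; rewrite !gt_eqF //; lra.
apply: ev_cvg K; near=> n.
have jn : (j <= n)%N by near: n; apply: nbhs_infty_ge.
by rewrite alpha_sum.
Unshelve. all: end_near. Qed.
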